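(* Let $\mathcal H$ be a finite-dimensional Hilbert space and let $|\psi\rangle\in(\mathbb{C}^2)^{\otimes n}\otimes\mathcal H$ be a unit vector of the form \[ |\psi\rangle=\big(\alpha|0^n\rangle+\delta|v_1\rangle+\beta|v_{\ge2}\rangle\big)\otimes|g\rangle+\gamma|\perp\rangle, \] where $\alpha,\beta,\delta,\gamma$ are nonnegative reals; $|v_1\rangle,|v_{\ge2}\rangle\in(\mathbb{C}^2)^{\otimes n}$, $|g\rangle\in\mathcal H$ and $|\perp\rangle$ are unit vectors; $|v_1\rangle$ is supported only on computational basis strings of Hamming weight $1$; $|v_{\ge2}\rangle$ is supported only on strings of Hamming weight at least $2$; and $|\perp\rangle$ is orthogonal to every vector of the form $|0^n\rangle\otimes|h\rangle$ ($|h\rangle\in\mathcal H$) and to every vector of the form $|x\rangle\otimes|g\rangle$ ($|x\rangle\in(\mathbb{C}^2)^{\otimes n}$). Suppose $\alpha^2=2/3+c$ with $c\ge0$. Then for every pure product state $|\pi\rangle=|\pi_1\rangle\otimes\cdots\otimes|\pi_n\rangle$ on $n$ qubits, \[ \big\|(\langle\pi|\otimes I)|\psi\rangle\big\|_2^2\le\Big(\alpha+\min\Big\{\delta,\sqrt{\tfrac{2}{27}}\,\tfrac{\delta^2}{c}\Big\}\Big)^2, \] where for $c=0$ the minimum is interpreted as $\delta$.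
   Context: $|0^n\rangle$ is the all-zeros computational basis state of $n$ qubits; $I$ is the identity on $\mathcal H$. *)

(* Defs.v *)
(* Scalars: an arbitrary numeric algebraically closed field C
   (e.g. algC, or complex numbers); the paper's case is C = complex numbers. *)
From HB Require Import structures.
From mathcomp Require Import all_boot all_order all_algebra.
Set Implicit Arguments. Unset Strict Implicit. Unset Printing Implicit Defensive.
Import Order.TTheory GRing.Theory Num.Theory.
Export Num.Def.
Local Open Scope ring_scope.

Definition bits (n : nat) := {ffun 'I_n -> bool}.

Definition hweight (n : nat) (x : bits n) : nat := #|[set i | x i]|.

Definition zeros (n : nat) : bits n := [ffun _ => false].

Section Vec.
Variable C : numClosedFieldType.

(* vectors are functions from a finite basis to C *)
Definition dotv (T : finType) (u v : T -> C) : C := \sum_(t : T) (u t)^* * v t.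
Definition normsq (T : finType) (u : T -> C) : C := \sum_(t : T) `|u t| ^+ 2.

(* vectors of (C^2)^{⊗n} ⊗ H with H = C^m: indexed by bits n * 'I_m *)
Definition tensv (n m : nat) (q : bits n -> C) (h : 'I_m -> C) : bits n * 'I_m -> C :=
  fun p => q p.1 * h p.2.

Definition ket0 (n : nat) : bits n -> C := fun x => (x == zeros n)%:R.

Definition prodstate (n : nat) (pi : 'I_n -> bool -> C) : bits n -> C :=
  fun x => \prod_(k < n) pi k (x k).

(* partial inner product (<pi| ⊗ I)|psi>, a vector of H *)
Definition partial_apply (n m : nat) (phi : bits n -> C) (psi : bits n * 'I_m -> C)
  : 'I_m -> C := fun i => \sum_(x : bits n) (phi x)^* * psi (x, i).
End Vec.

(* Main.v *)
Require Import Defs.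
From HB Require Import structures.
From mathcomp Require Import all_boot all_order all_algebra.
From mathcomp Require Import ring lra.
Import Order.TTheory GRing.Theory Num.Theory Num.Def.
Local Open Scope ring_scope.
Set Implicit Arguments. Unset Strict Implicit. Unset Printing Implicit Defensive.

Section RealSub.
Variable C : numClosedFieldType.
Definition RC := {x : C | x \is Num.real}.
HB.instance Definition _ := [isSub of RC for (@sval C (fun x => x \is Num.real))].
HB.instance Definition _ := [Choice of RC by <:].
HB.instance Definition _ := [SubChoice_isSubZmodule of RC by <:].
HB.instance Definition _ := [SubZmodule_isSubNzRing of RC by <:].
HB.instance Definition _ := [SubNzRing_isSubComNzRing of RC by <:].
HB.instance Definition _ := [SubNzRing_isSubUnitRing of RC by <:].
HB.instance Definition _ := [SubComUnitRing_isSubIntegralDomain of RC by <:].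
HB.instance Definition _ := [SubIntegralDomain_isSubField of RC by <:].

Definition rcle (x y : RC) := val x <= val y.
Definition rclt (x y : RC) := val x < val y.
Definition rcnorm (x : RC) : RC := if 0 <= val x then x else - x.

Lemma rc_le0_add x y : rcle 0 x -> rcle 0 y -> rcle 0 (x + y).
Proof. rewrite /rcle /= => *; exact: addr_ge0. Qed.
Lemma rc_le0_mul x y : rcle 0 x -> rcle 0 y -> rcle 0 (x * y).
Proof. rewrite /rcle /= => *; exact: mulr_ge0. Qed.
Lemma rc_le0_anti x : rcle 0 x -> rcle x 0 -> x = 0.
Proof. rewrite /rcle /= => h1 h2; apply: val_inj => /=; apply/eqP; by rewrite eq_le h1 h2. Qed.
Lemma rc_sub_ge0 x y : rcle 0 (y - x) = rcle x y.
Proof. by rewrite /rcle /= subr_ge0. Qed.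
Lemma rc_le0_total x : rcle 0 x || rcle x 0.
Proof. rewrite /rcle /=; case: x => x /= hx; by rewrite -realE. Qed.
Lemma rc_normN x : rcnorm (- x) = rcnorm x.
Proof.
rewrite /rcnorm.
have -> : val (- x) = - val x by [].
have hx := valP x; rewrite realE in hx.
rewrite opprK oppr_ge0.
case: (boolP (0 <= val x)) => h; case: (boolP (val x <= 0)) => h' //.
- have e : val x = 0 by apply/eqP; rewrite eq_le h h'.
  by apply: val_inj; rewrite /= e oppr0.
- by move: hx; rewrite (negbTE h) (negbTE h').
Qed.
Lemma rc_ge0_norm x : rcle 0 x -> rcnorm x = x.
Proof. by rewrite /rcle /rcnorm /= => ->. Qed.
Lemma rc_lt_def x y : rclt x y = (y != x) && rcle x y.
Proof. by rewrite /rclt /rcle lt_def. Qed.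
HB.instance Definition _ := Num.IntegralDomain_isLeReal.Build RC
  rc_le0_add rc_le0_mul rc_le0_anti rc_sub_ge0 rc_le0_total rc_normN rc_ge0_norm rc_lt_def.

Lemma test (a b : RC) : 0 <= a -> 0 <= b -> 0 <= a * b + a.
Proof. move=> *; nra. Qed.
Lemma rcleE (a b : RC) : (a <= b) = (val a <= val b).
Proof. by []. Qed.

Definition rc (x : C) : RC := insubd 0 x.
Lemma rcK (x : C) : x \is Num.real -> val (rc x) = x.
Proof. by move=> h; rewrite /rc insubdK. Qed.
Lemma valM (a b : RC) : val (a * b) = val a * val b. Proof. by rewrite rmorphM. Qed.
Lemma valX (a : RC) n : val (a ^+ n) = val a ^+ n. Proof. by rewrite rmorphXn. Qed.
Lemma valV (a : RC) : val (a ^-1) = (val a) ^-1. Proof. by rewrite fmorphV. Qed.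
Lemma valN (n : nat) : val (n%:R : RC) = n%:R. Proof. by rewrite rmorph_nat. Qed.
Lemma valS I r (P : pred I) (F : I -> RC) : val (\sum_(i <- r | P i) F i) = \sum_(i <- r | P i) val (F i).
Proof. by rewrite rmorph_sum. Qed.
Lemma valP' I r (P : pred I) (F : I -> RC) : val (\prod_(i <- r | P i) F i) = \prod_(i <- r | P i) val (F i).
Proof. by rewrite rmorph_prod. Qed.
Lemma valD (a b : RC) : val (a + b) = val a + val b. Proof. by rewrite rmorphD. Qed.
Lemma valB (a b : RC) : val (a - b) = val a - val b. Proof. by rewrite rmorphB. Qed.
Lemma valO (a : RC) : val (- a) = - val a. Proof. by rewrite rmorphN. Qed.
Lemma val1 : val (1 : RC) = 1. Proof. by rewrite rmorph1. Qed.
Lemma val0 : val (0 : RC) = 0. Proof. by rewrite rmorph0. Qed.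
Lemma rcltE (a b : RC) : (a < b) = (val a < val b). Proof. by []. Qed.
End RealSub.

Lemma sqrt_le (R : realFieldType) (a b : R) : 0 <= b -> a ^+ 2 <= b ^+ 2 -> a <= b.
Proof.
move=> hb h; case: (lerP a 0) => ha; first exact: le_trans ha hb.
by rewrite -(ler_pXn2r (n:=2)) ?nnegrE // ltW.
Qed.

Lemma sq_le (R : realFieldType) (a b : R) : 0 <= a -> a <= b -> a ^+ 2 <= b ^+ 2.
Proof. by move=> ha hab; rewrite !expr2; apply: ler_pM. Qed.

Lemma core (R : realFieldType) (x y z al be ga de c k r q A G : R) :
  0 <= x -> 0 <= y -> 0 <= z -> 0 <= al -> 0 <= be -> 0 <= ga -> 0 <= de ->
  0 <= c -> 0 <= k -> 0 <= r -> 0 <= q -> 0 <= A -> 0 <= G ->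
  r ^+ 2 = 2 -> k ^+ 2 = 2 / 27 -> q ^+ 2 = 1/3 - c ->
  al ^+ 2 = 2/3 + c -> al ^+ 2 + be ^+ 2 + ga ^+ 2 + de ^+ 2 = 1 ->
  x ^+ 2 + y ^+ 2 + z ^+ 2 = 1 ->
  2 * x ^+ 2 * (1 - x ^+ 2) <= y ^+ 2 * (1 + x ^+ 2) ->
  A <= al * x + de * y + be * z -> G <= 1 - x ^+ 2 ->
  let T := al - 27 / 8 * k * c * (1 - x ^+ 2) in
  0 <= T + de * y /\ A ^+ 2 + ga ^+ 2 * G <= (T + de * y) ^+ 2.
Proof.
move=> hx hy hz hal hbe hga hde hc hk hr hq hA hG er ek eqq eal esum exyz hprod hAb hGb T.
have x2 : x ^+ 2 <= 1 by have := sqr_ge0 y; have := sqr_ge0 z; lra.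
have x1 : x <= 1 by apply: sqrt_le; rewrite ?expr1n.
have y2 : y ^+ 2 <= 1 - x ^+ 2 by have := sqr_ge0 z; lra.
have h1 : z ^+ 2 * (1 + x ^+ 2) <= (1 - x ^+ 2) ^+ 2 by nra.
have zb : z <= r * (1 - x).
  apply: sqrt_le; first by apply: mulr_ge0; lra.
  have hp : 0 < (1 + x) ^+ 2 by nra.
  rewrite exprMn er -(ler_pM2r hp).
  have -> : 2 * (1 - x) ^+ 2 * (1 + x) ^+ 2 = 2 * (1 - x ^+ 2) ^+ 2 by ring.
  nra.
have c13 : c <= 1/3 by have := sqr_ge0 be; have := sqr_ge0 ga; have := sqr_ge0 de; lra.
have bq2 : be ^+ 2 + ga ^+ 2 <= q ^+ 2 by have := sqr_ge0 de; lra.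
have bq : be <= q by apply: sqrt_le => //; have := sqr_ge0 ga; lra.
have alp : 0 < al by apply: (@lt_le_trans _ _ (al ^+ 2 / 2)); nra.
have e1 : 9 * k * al <= 4.
  apply: sqrt_le => //.
  rewrite !exprMn ek eal; nra.
have e0 : 27 / 4 * k * c <= al - r * q.
  have S2 : (al + r * q) ^+ 2 <= 8 / 3.
    have : (al + r * q) ^+ 2 <= 2 * (al ^+ 2 + r ^+ 2 * q ^+ 2).
      have := sqr_ge0 (al - r * q); nra.
    rewrite er eqq eal; lra.
  have S9 : 9 * k * (al + r * q) <= 4.
    apply: sqrt_le => //. rewrite exprMn [(9 * k) ^+ 2]exprMn ek. nra.
  have Sp : 0 < al + r * q by have := mulr_ge0 hr hq; lra.
  rewrite -(ler_pM2r Sp).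
  have -> : (al - r * q) * (al + r * q) = 3 * c.
    have -> : (al - r * q) * (al + r * q) = al ^+ 2 - r ^+ 2 * q ^+ 2 by ring.
    rewrite er eqq eal; lra.
  have -> : 27 / 4 * k * c * (al + r * q) = 3 / 4 * c * (9 * k * (al + r * q)) by ring.
  nra.
have qr : 2 * q <= r * al.
  apply: sqrt_le; first by apply: mulr_ge0.
  rewrite !exprMn er eqq eal; lra.
set lam := 27 / 8 * k * c.
set w := 1 - x.
set a := al - r * be.
set u := al * x + be * z.
have hu : u <= al - a * w.
  rewrite /u /a /w. have := ler_wpM2l hbe zb. lra.
have hu0 : 0 <= u by rewrite /u; apply: addr_ge0; apply: mulr_ge0.
have L0 : 0 <= al * a - 2 * al * lam - ga ^+ 2.
  have hq1 : q ^+ 2 - r * al * q <= be ^+ 2 - r * al * be.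
    have : 0 <= (q - be) * (r * al - q - be) by apply: mulr_ge0; lra.
    lra.
  have hq2 : 0 <= al * (al - r * q - 27 / 4 * k * c) by apply: mulr_ge0; lra.
  rewrite /a /lam. lra.
have L1 : 0 <= 2 * al * a - 2 * al * lam - a ^+ 2 - ga ^+ 2.
  have ea : 2 * al * a - a ^+ 2 = al ^+ 2 - r ^+ 2 * be ^+ 2 by rewrite /a; ring.
  rewrite er in ea.
  have : 0 <= c * (3 - 27 / 4 * k * al) by apply: mulr_ge0; lra.
  have -> : 2 * al * a - 2 * al * lam - a ^+ 2 - ga ^+ 2 = (2 * al * a - a ^+ 2) - ga ^+ 2 - 2 * al * lam by ring.
  rewrite ea /lam => hh.
  have -> : 2 * al * (27 / 8 * k * c) = 27 / 4 * k * c * al by field.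
  have : 27 / 4 * k * c * al <= 3 * c.
    have -> : 27 / 4 * k * c * al = c * (27 / 4 * k * al) by ring.
    move: hh; rewrite mulrBr; lra.
  have := sqr_ge0 ga. lra.
have w0 : 0 <= w by rewrite /w; lra.
have w1 : w <= 1 by rewrite /w; lra.
have key : (al - a * w) ^+ 2 + ga ^+ 2 * (1 - x ^+ 2) <= T ^+ 2.
  have -> : T ^+ 2 = (al - a * w) ^+ 2 + ga ^+ 2 * (1 - x ^+ 2) +
     w * ((1 - w) * 2 * (al * a - 2 * al * lam - ga ^+ 2) + w * (2 * al * a - 2 * al * lam - a ^+ 2 - ga ^+ 2)
          + lam ^+ 2 * (2 - w) ^+ 2 * w).
    rewrite /T /w /lam; ring.
  rewrite lerDl; apply: mulr_ge0 => //.
  apply: addr_ge0; last by apply: mulr_ge0 => //; apply: mulr_ge0 => //; apply: sqr_ge0.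
  apply: addr_ge0; apply: mulr_ge0 => //; apply: mulr_ge0; lra.
have lam38 : lam <= 3 / 8.
  have k3 : 9 * k <= 3 by apply: sqrt_le => //; rewrite exprMn ek; lra.
  have : (9 * k) * c <= 3 * (1/3) by apply: ler_pM => //; apply: mulr_ge0.
  rewrite /lam; lra.
have al38 : 3 / 8 <= al by apply: sqrt_le => //; rewrite eal; lra.
have s1 : 1 - x ^+ 2 <= 1 by have := sqr_ge0 x; lra.
have s0 : 0 <= 1 - x ^+ 2 by lra.
have lam0 : 0 <= lam by have := mulr_ge0 hk hc; rewrite /lam; lra.
have T0 : 0 <= T.
  have : lam * (1 - x ^+ 2) <= 3/8 * 1 by apply: ler_pM.
  rewrite /T -/lam; lra.
have u2 : u ^+ 2 <= (al - a * w) ^+ 2.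
  by apply: sq_le.
have uT : u <= T by apply: sqrt_le => //; have := mulr_ge0 (sqr_ge0 ga) s0; lra.
have dy0 : 0 <= de * y by apply: mulr_ge0.
split; first lra.
have A2 : A ^+ 2 <= (u + de * y) ^+ 2 by apply: sq_le => //; rewrite /u; lra.
have G2 : ga ^+ 2 * G <= ga ^+ 2 * (1 - x ^+ 2) by apply: ler_wpM2l => //; apply: sqr_ge0.
have : u * (de * y) <= T * (de * y) by apply: ler_wpM2r.
have : u ^+ 2 + ga ^+ 2 * (1 - x ^+ 2) <= T ^+ 2 by lra.
rewrite !sqrrD in A2 *. lra.
Qed.

Lemma core2 (R : realFieldType) (x y z al be ga de c k r q A G : R) :
  0 <= x -> 0 <= y -> 0 <= z -> 0 <= al -> 0 <= be -> 0 <= ga -> 0 <= de ->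
  0 <= c -> 0 <= k -> 0 <= r -> 0 <= q -> 0 <= A -> 0 <= G ->
  r ^+ 2 = 2 -> k ^+ 2 = 2 / 27 -> q ^+ 2 = 1/3 - c ->
  al ^+ 2 = 2/3 + c -> al ^+ 2 + be ^+ 2 + ga ^+ 2 + de ^+ 2 = 1 ->
  x ^+ 2 + y ^+ 2 + z ^+ 2 = 1 ->
  2 * x ^+ 2 * (1 - x ^+ 2) <= y ^+ 2 * (1 + x ^+ 2) ->
  A <= al * x + de * y + be * z -> G <= 1 - x ^+ 2 ->
  A ^+ 2 + ga ^+ 2 * G <= (al + de) ^+ 2 /\
  (0 < c -> A ^+ 2 + ga ^+ 2 * G <= (al + k * de ^+ 2 / c) ^+ 2).
Proof.
move=> hx hy hz hal hbe hga hde hc hk hr hq hA hG er ek eqq eal esum exyz hprod hAb hGb.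
have [T0 HF] := core hx hy hz hal hbe hga hde hc hk hr hq hA hG er ek eqq eal esum exyz hprod hAb hGb.
set T := al - 27 / 8 * k * c * (1 - x ^+ 2) in T0 HF.
have y2 : y ^+ 2 <= 1 - x ^+ 2 by have := sqr_ge0 z; lra.
have y1 : y <= 1.
  apply: sqrt_le => //; rewrite expr1n; have := sqr_ge0 x; lra.
have lam0 : 0 <= 27 / 8 * k * c by have := mulr_ge0 hk hc; lra.
have ls : 27 / 8 * k * c * y ^+ 2 <= 27 / 8 * k * c * (1 - x ^+ 2) by apply: ler_wpM2l.
split.
  apply: (le_trans HF); apply: sq_le => //.
  have : de * y <= de * 1 by apply: ler_wpM2l.
  have := mulr_ge0 lam0 (sqr_ge0 y). rewrite /T; lra.
move=> cp.
apply: (le_trans HF); apply: sq_le => //.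
have kp : 0 < k.
  rewrite lt_def hk andbT; apply/eqP => k0; move: ek; rewrite k0 expr0n /=; lra.
suff : de * y - 27 / 8 * k * c * y ^+ 2 <= k * de ^+ 2 / c by rewrite /T; lra.
rewrite ler_pdivlMr //.
have k4 : 0 < 4 * k by lra.
rewrite -(ler_pM2l k4).
have := sqr_ge0 (2 * k * de - c * y).
have -> : 4 * k * ((de * y - 27 / 8 * k * c * y ^+ 2) * c) = 4 * k * c * de * y - 27 / 2 * k ^+ 2 * c ^+ 2 * y ^+ 2 by field.
have -> : 4 * k * (k * de ^+ 2) = 4 * k ^+ 2 * de ^+ 2 by ring.
rewrite ek.
have -> : (2 * k * de - c * y) ^+ 2 = 4 * k ^+ 2 * de ^+ 2 - 4 * k * c * de * y + c ^+ 2 * y ^+ 2 by ring.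
rewrite ek. lra.
Qed.

Definition ebit n (k : 'I_n) : bits n := [ffun j => j == k].

Lemma ebit_inj n : injective (@ebit n).
Proof. by move=> k k' /ffunP /(_ k); rewrite !ffunE eqxx => /esym/eqP. Qed.

Lemma hweight_ebit n (k : 'I_n) : hweight (ebit k) = 1%N.
Proof.
rewrite /hweight (_ : [set i | ebit k i] = [set k]) ?cards1 //.
by apply/setP => i; rewrite !inE ffunE.
Qed.

Lemma hweight1 n (x : bits n) : hweight x = 1%N -> exists k, x = ebit k.
Proof.
rewrite /hweight => /eqP /cards1P [k hk]; exists k; apply/ffunP => i.
by rewrite ffunE -(in_set1 i k) -hk inE.
Qed.

Lemma sum_w1 (R : nmodType) n (F : bits n -> R) :
  \sum_(x : bits n | hweight x == 1%N) F x = \sum_(k < n) F (ebit k).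
Proof.
have key x : (if hweight x == 1%N then F x else 0) = \sum_(k < n) (if x == ebit k then F x else 0).
  case: (pickP (fun k => x == ebit k)) => [k /eqP xk | none].
  - rewrite (bigD1 k) //= xk eqxx hweight_ebit eqxx big1 ?addr0 // => j jk.
    by rewrite (inj_eq (@ebit_inj n)) eq_sym (negbTE jk).
  - rewrite big1 => [|j _]; last by rewrite none.
    case: eqP => // /hweight1 [k xk].
    by have := none k; rewrite xk eqxx.
rewrite big_mkcond (eq_bigr _ (fun x _ => key x)) exchange_big /=.
apply: eq_bigr => k _.
rewrite (bigD1 (ebit k)) //= eqxx big1 ?addr0 // => x /negbTE ->; done.
Qed.

Definition PP1 (R : comPzRingType) (a b : nat -> R) n :=
  \sum_(k < n) b k * \prod_(j < n | (j : nat) != k) a j.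

Lemma PP1S (R : comPzRingType) (a b : nat -> R) n :
  PP1 a b n.+1 = a n * PP1 a b n + b n * \prod_(k < n) a k.
Proof.
rewrite /PP1 big_ord_recr /= mulr_sumr; congr (_ + _).
  apply: eq_bigr => k _; rewrite big_mkcond big_ord_recr /= -big_mkcond /=.
  have hk : (n != k) by rewrite eq_sym (ltn_eqF (ltn_ord k)).
  by rewrite hk; ring.
rewrite big_mkcond big_ord_recr /= eqxx mulr1; congr (_ * _).
by apply: eq_bigr => i _; rewrite neq_ltn ltn_ord.
Qed.

Lemma prod_inv (R : realFieldType) (a b : nat -> R) n :
  (forall k, 0 <= a k) -> (forall k, 0 <= b k) -> (forall k, a k + b k = 1) ->
  [/\ 0 <= \prod_(k < n) a k, \prod_(k < n) a k <= 1, 0 <= PP1 a b n &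
   2 * (\prod_(k < n) a k) * (1 - \prod_(k < n) a k) <= PP1 a b n * (1 + \prod_(k < n) a k)].
Proof.
move=> ha hb hab; elim: n => [|n [p0 p1 P0 IH]].
  by rewrite big_ord0 /PP1 big_ord0; split => //; lra.
rewrite PP1S big_ord_recr /=.
set p := \prod_(i < n) a i in p0 p1 IH *; set P := PP1 a b n in P0 IH *.
have an := ha n; have bn := hb n; have abn := hab n.
have a1 : a n <= 1 by lra.
split.
- exact: mulr_ge0.
- by rewrite -[1]mulr1; apply: ler_pM.
- by apply: addr_ge0; apply: mulr_ge0.
have q0 : 0 <= 1 + p - 3 * a n * p + a n * p ^+ 2.
  have -> : 1 + p - 3 * a n * p + a n * p ^+ 2 = b n * (1 + p) + a n * (1 - p) ^+ 2.
    have -> : b n = 1 - a n by lra.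
    ring.
  by apply: addr_ge0; apply: mulr_ge0 => //; [lra | apply: sqr_ge0].
have h1 : a n * (2 * p * (1 - p)) * (1 + p * a n) <= a n * (P * (1 + p)) * (1 + p * a n).
  apply: ler_wpM2r; first by have := mulr_ge0 p0 an; lra.
  exact: ler_wpM2l.
have h2 : 0 <= p * b n * (1 + p - 3 * a n * p + a n * p ^+ 2) by apply: mulr_ge0 => //; apply: mulr_ge0.
have pp : 0 < 1 + p by lra.
rewrite -(ler_pM2r pp).
have -> : b n = 1 - a n by lra.
move: h1 h2; have -> : b n = 1 - a n by lra.
move=> h1 h2. nra.
Qed.

Section Quantum.
Variable C : numClosedFieldType.

Lemma CS (T : finType) (P : pred T) (u v : T -> C) :
  `|\sum_(t | P t) (u t)^* * v t| ^+ 2 <=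
  (\sum_(t | P t) `|u t| ^+ 2) * (\sum_(t | P t) `|v t| ^+ 2).
Proof.
set A := \sum_(t | P t) `|u t| ^+ 2.
set B := \sum_(t | P t) `|v t| ^+ 2.
set S := \sum_(t | P t) (u t)^* * v t.
have A0 : 0 <= A by apply: sumr_ge0 => t _; apply: exprn_ge0.
have Ar : A^* = A by apply: geC0_conj.
have pw t : `|A * v t - S * u t| ^+ 2 = A ^+ 2 * `|v t| ^+ 2 - A * S^* * ((u t)^* * v t)
    - A * S * ((u t)^* * v t)^* + `|S| ^+ 2 * `|u t| ^+ 2.
  rewrite !normCK !rmorphB !rmorphM /= ?conjCK Ar. ring.
have E : \sum_(t | P t) `|A * v t - S * u t| ^+ 2 = A * (A * B - `|S| ^+ 2).
  rewrite (eq_bigr _ (fun t _ => pw t)).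
  rewrite !big_split /= !sumrN -!mulr_sumr -/B -/A -/S -rmorph_sum -/S.
  rewrite !normCK; ring.
have E0 : 0 <= A * (A * B - `|S| ^+ 2).
  by rewrite -E; apply: sumr_ge0 => t _; apply: exprn_ge0.
have [hA|hA] := eqVneq A 0; last first.
  have Ap : 0 < A by rewrite lt_def hA A0.
  by move: E0; rewrite pmulr_rge0 // subr_ge0.
have u0 : forall t, P t -> u t = 0.
  move=> t Pt; apply/eqP; rewrite -normr_eq0 -(@sqrf_eq0 _ `|u t|).
  move/eqP: hA; rewrite psumr_eq0 => [/allP H|t' _]; last exact: exprn_ge0.
  by have := H t (mem_index_enum t); rewrite Pt.
have -> : S = 0 by rewrite /S big1 // => t Pt; rewrite u0 // conjC0 mul0r.
by rewrite normr0 expr0n /= hA mul0r.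
Qed.

Lemma pyth (T : finType) (u v : T -> C) (ga : C) : 0 <= ga -> dotv u v = 0 ->
  normsq (fun t => u t + ga * v t) = normsq u + ga ^+ 2 * normsq v.
Proof.
move=> hg huv; have gr : ga^* = ga by apply: geC0_conj.
have pw t : `|u t + ga * v t| ^+ 2 = `|u t| ^+ 2 + ga * ((u t)^* * v t)
   + ga * ((u t)^* * v t)^* + ga ^+ 2 * `|v t| ^+ 2.
  rewrite !normCK !rmorphD !rmorphM /= ?conjCK gr; ring.
rewrite /normsq (eq_bigr _ (fun t _ => pw t)) !big_split /= -!mulr_sumr.
rewrite -rmorph_sum; move: huv; rewrite /dotv => ->; rewrite rmorph0 !mulr0 !addr0.
done.
Qed.

Lemma hweight0 n (x : bits n) : (hweight x == 0%N) = (x == zeros n).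
Proof.
rewrite /hweight cards_eq0; apply/eqP/eqP => [h|->].
- apply/ffunP => i; rewrite ffunE; case E: (x i) => //.
  have : i \in [set i | x i] by rewrite inE.
  by rewrite h inE.
- by apply/setP => i; rewrite !inE ffunE.
Qed.

Lemma sum_prodstate n (pi : 'I_n -> bool -> C) :
  (forall k, normsq (pi k) = 1) -> \sum_(x : bits n) `|prodstate pi x| ^+ 2 = 1.
Proof.
move=> hpi.
have -> : \sum_(x : bits n) `|prodstate pi x| ^+ 2 =
   \sum_(f : {ffun 'I_n -> bool}) \prod_(k < n) `|pi k (f k)| ^+ 2.
  by apply: eq_bigr => x _; rewrite /prodstate normr_prod prodrXl.
rewrite -(bigA_distr_bigA (fun k b => `|pi k b| ^+ 2)).
by rewrite big1 // => k _; apply: hpi.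
Qed.
End Quantum.

Lemma sum_pair (R : nmodType) (T1 T2 : finType) (F : T1 * T2 -> R) :
  \sum_(p : T1 * T2) F p = \sum_(x : T1) \sum_(j : T2) F (x, j).
Proof. by rewrite pair_bigA; apply: eq_bigr => [[]]. Qed.

Lemma ket0_zeros (C : numClosedFieldType) n (F : bits n -> C) :
  \sum_(x : bits n) @ket0 C n x * F x = F (zeros n).
Proof.
rewrite (bigD1 (zeros n)) //= big1 ?addr0; first by rewrite /ket0 eqxx mul1r.
by move=> x /negbTE hx; rewrite /ket0 hx mul0r.
Qed.

Lemma hweight_zeros n : hweight (zeros n) = 0%N.
Proof. by apply/eqP; rewrite hweight0. Qed.

Unset Implicit Arguments.
Theorem theorem4p4 (C : numClosedFieldType) (n m : nat)
  (psi : bits n * 'I_m -> C) (v1 v2 : bits n -> C) (g : 'I_m -> C)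
  (perp : bits n * 'I_m -> C) (alpha beta delta gamma c : C) :
  0 <= alpha -> 0 <= beta -> 0 <= delta -> 0 <= gamma ->
  normsq psi = 1 ->
  normsq v1 = 1 -> normsq v2 = 1 -> normsq g = 1 -> normsq perp = 1 ->
  (forall x : bits n, hweight x != 1%N -> v1 x = 0) ->
  (forall x : bits n, (hweight x < 2)%N -> v2 x = 0) ->
  (forall h : 'I_m -> C, dotv (tensv (@ket0 C n) h) perp = 0) ->
  (forall q : bits n -> C, dotv (tensv q g) perp = 0) ->
  (forall p : bits n * 'I_m,
     psi p = tensv (fun x => alpha * @ket0 C n x + delta * v1 x + beta * v2 x) g p
             + gamma * perp p) ->
  alpha ^+ 2 = 2%:R / 3%:R + c -> 0 <= c ->
  forall pi : 'I_n -> bool -> C,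
    (forall k : 'I_n, normsq (pi k) = 1) ->
    normsq (partial_apply (prodstate pi) psi)
    <= (alpha + (if c == 0 then delta
                 else Num.min delta (sqrtC (2%:R / 27%:R) * delta ^+ 2 / c))) ^+ 2.
Proof.
move=> al0 be0 de0 ga0 npsi nv1 nv2 ng nperp sv1 sv2 hperp0 hperpg hpsi eal c0 pi hpi.
set pis := prodstate pi.
set Aq := fun x => alpha * @ket0 C n x + delta * v1 x + beta * v2 x.
have perp0 : forall i, perp (zeros n, i) = 0.
  move=> i; have := hperp0 (fun j => (j == i)%:R).
  rewrite /dotv sum_pair (bigD1 (zeros n)) //=.
  rewrite [X in _ + X]big1; last first.
    move=> x hx; apply: big1 => j _.
    by rewrite /tensv /= /ket0 (negbTE hx) mul0r conjC0 mul0r.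
  rewrite addr0 (bigD1 i) //= [X in _ + X]big1; last first.
    by move=> j hj; rewrite /tensv /= (negbTE hj) mulr0 conjC0 mul0r.
  by rewrite /tensv /= /ket0 !eqxx mulr1 conjC1 mul1r addr0.
have spi := sum_prodstate hpi.
have nA : normsq Aq = alpha ^+ 2 + delta ^+ 2 + beta ^+ 2.
  have pw x : `|Aq x| ^+ 2 = alpha ^+ 2 * `|@ket0 C n x| ^+ 2 + delta ^+ 2 * `|v1 x| ^+ 2
                            + beta ^+ 2 * `|v2 x| ^+ 2.
    rewrite /Aq; have [->|hx] := eqVneq x (zeros n).
      rewrite sv1 ?sv2 ?hweight_zeros //.
      by rewrite !mulr0 !addr0 normr0 expr0n /= !mulr0 !addr0 normrM exprMn ger0_norm.
    have k0 : @ket0 C n x = 0 by rewrite /ket0 (negbTE hx).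
    rewrite k0 mulr0 add0r normr0 expr0n /= mulr0 add0r.
    have [h1|h1] := eqVneq (hweight x) 1%N.
      rewrite (sv2 x); last by rewrite h1.
      by rewrite mulr0 addr0 normr0 expr0n /= mulr0 addr0 normrM exprMn ger0_norm.
    rewrite (sv1 x h1) mulr0 add0r normr0 expr0n /= mulr0 add0r normrM exprMn ger0_norm //.
  rewrite /normsq (eq_bigr _ (fun x _ => pw x)) !big_split /= -!mulr_sumr.
  rewrite -/(normsq v1) -/(normsq v2) nv1 nv2 !mulr1.
  have -> : \sum_(i : bits n) `|@ket0 C n i| ^+ 2 = 1.
    rewrite (bigD1 (zeros n)) //= big1 ?addr0; first by rewrite /ket0 eqxx normr1 expr1n.
    by move=> x hx; rewrite /ket0 (negbTE hx) normr0 expr0n.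
  by rewrite mulr1.
have norm1 : alpha ^+ 2 + beta ^+ 2 + gamma ^+ 2 + delta ^+ 2 = 1.
  have e1 : normsq psi = normsq (fun p => tensv Aq g p + gamma * perp p).
    by apply: eq_bigr => p _; rewrite hpsi.
  rewrite pyth // in e1.
  have : normsq (tensv Aq g) = normsq Aq * normsq g.
    rewrite /normsq sum_pair mulr_suml; apply: eq_bigr => x _.
    rewrite mulr_sumr; apply: eq_bigr => i _; by rewrite /tensv normrM exprMn.
  move=> e2; rewrite e2 nA ng nperp npsi mulr1 mulr1 in e1.
  rewrite e1; ring.
set a := \sum_(x : bits n) (pis x)^* * Aq x.
set Pp := fun i => \sum_(x : bits n) (pis x)^* * perp (x, i).
have ePhi : normsq (partial_apply pis psi) = `|a| ^+ 2 + gamma ^+ 2 * normsq Pp.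
  have e1 : normsq (partial_apply pis psi) = normsq (fun i => a * g i + gamma * Pp i).
    apply: eq_bigr => i _; congr (`|_| ^+ 2).
    rewrite /partial_apply /a /Pp mulr_suml mulr_sumr -big_split /=.
    apply: eq_bigr => x _; rewrite hpsi /tensv /Aq /=; ring.
  rewrite e1 pyth //.
    congr (_ + _); rewrite -[`|a| ^+ 2]mulr1 -ng /normsq mulr_sumr; apply: eq_bigr => i _.
    by rewrite normrM exprMn.
  rewrite /dotv.
  have -> : \sum_i (a * g i)^* * Pp i = a^* * \sum_i (g i)^* * Pp i.
    by rewrite mulr_sumr; apply: eq_bigr => i _; rewrite rmorphM /= mulrA.
  have -> : \sum_i (g i)^* * Pp i = dotv (tensv pis g) perp.
    rewrite /dotv sum_pair exchange_big /=; apply: eq_bigr => i _.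
    rewrite /Pp mulr_sumr; apply: eq_bigr => x _; rewrite /tensv /= rmorphM /=; ring.
  by rewrite hperpg mulr0.
have P0le : normsq Pp <= 1 - `|pis (zeros n)| ^+ 2.
  have srest : \sum_(x | x != zeros n) `|pis x| ^+ 2 = 1 - `|pis (zeros n)| ^+ 2.
    by have := spi; rewrite (bigD1 (zeros n)) //= => <-; ring.
  have pw i : `|Pp i| ^+ 2 <= (1 - `|pis (zeros n)| ^+ 2) * \sum_x `|perp (x, i)| ^+ 2.
    have e : Pp i = \sum_(x | x != zeros n) (pis x)^* * perp (x, i).
      by rewrite /Pp (bigD1 (zeros n)) //= perp0 mulr0 add0r.
    have e' : \sum_x `|perp (x, i)| ^+ 2 = \sum_(x | x != zeros n) `|perp (x, i)| ^+ 2.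
      by rewrite (bigD1 (zeros n)) //= perp0 normr0 expr0n add0r.
    by rewrite e e' -srest; apply: CS.
  apply: (le_trans (ler_sum _ (fun i _ => pw i))).
  rewrite -mulr_sumr exchange_big /= -(@sum_pair _ _ _ (fun p => `|perp p| ^+ 2)) -/(normsq perp) nperp mulr1.
  done.
set P1 := \sum_(x : bits n | hweight x == 1%N) `|pis x| ^+ 2.
set P2 := \sum_(x : bits n | (1 < hweight x)%N) `|pis x| ^+ 2.
set X := `|pis (zeros n)|.
have P10 : 0 <= P1 by apply: sumr_ge0 => x _; apply: exprn_ge0.
have P20 : 0 <= P2 by apply: sumr_ge0 => x _; apply: exprn_ge0.
have sumP : X ^+ 2 + P1 + P2 = 1.
  rewrite -spi (bigD1 (zeros n)) //= (bigID (fun x => hweight x == 1%N)) /= addrA.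
  congr (_ + _ + _); apply: eq_bigl => x.
  - case: eqP => h; last by rewrite andbF.
    by rewrite andbT -hweight0 h.
  - rewrite -hweight0; case: (hweight x) => [|[|k]] //.
have abound : `|a| <= alpha * X + delta * sqrtC P1 + beta * sqrtC P2.
  have ea : a = alpha * (pis (zeros n))^* + delta * (\sum_x (pis x)^* * v1 x)
                 + beta * (\sum_x (pis x)^* * v2 x).
    rewrite /a /Aq.
    have pw x : (pis x)^* * (alpha * @ket0 C n x + delta * v1 x + beta * v2 x) =
       alpha * (@ket0 C n x * (pis x)^*) + delta * ((pis x)^* * v1 x) + beta * ((pis x)^* * v2 x).
      ring.
    by rewrite (eq_bigr _ (fun x _ => pw x)) !big_split /= -!mulr_sumr ket0_zeros.
  have S1b : `|\sum_x (pis x)^* * v1 x| <= sqrtC P1.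
    rewrite -(ler_pXn2r (n:=2)) ?nnegrE ?sqrtC_ge0 // sqrtCK.
    have -> : \sum_x (pis x)^* * v1 x = \sum_(x | hweight x == 1%N) (pis x)^* * v1 x.
      rewrite [in RHS]big_mkcond; apply: eq_bigr => x _.
      by case: eqP => // /eqP h; rewrite sv1 // mulr0.
    apply: (le_trans (CS _ _ _)).
    rewrite -[X in _ <= X]mulr1 ler_wpM2l //.
    rewrite -nv1 /normsq [X in _ <= X](bigID (fun x => hweight x == 1%N)) /= lerDl.
    by apply: sumr_ge0 => x _; apply: exprn_ge0.
  have S2b : `|\sum_x (pis x)^* * v2 x| <= sqrtC P2.
    rewrite -(ler_pXn2r (n:=2)) ?nnegrE ?sqrtC_ge0 // sqrtCK.
    have -> : \sum_x (pis x)^* * v2 x = \sum_(x | (1 < hweight x)%N) (pis x)^* * v2 x.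
      rewrite [in RHS]big_mkcond; apply: eq_bigr => x _.
      by case: ltnP => // h; rewrite sv2 // mulr0.
    apply: (le_trans (CS _ _ _)).
    rewrite -[X in _ <= X]mulr1 ler_wpM2l //.
    rewrite -nv2 /normsq [X in _ <= X](bigID (fun x => (1 < hweight x)%N)) /= lerDl.
    by apply: sumr_ge0 => x _; apply: exprn_ge0.
  rewrite ea; apply: (le_trans (ler_normD _ _)); apply: lerD; last first.
    by rewrite normrM ger0_norm // ler_wpM2l.
  apply: (le_trans (ler_normD _ _)); apply: lerD.
    by rewrite normrM ger0_norm // norm_conjC.
  by rewrite normrM ger0_norm // ler_wpM2l.
have hprod : 2 * X ^+ 2 * (1 - X ^+ 2) <= P1 * (1 + X ^+ 2).
  pose a' (j : nat) : C := oapp (fun k : 'I_n => `|pi k false| ^+ 2) 1 (insub j).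
  pose b' (j : nat) : C := oapp (fun k : 'I_n => `|pi k true| ^+ 2) 0 (insub j).
  have a'E (k : 'I_n) : a' k = `|pi k false| ^+ 2 by rewrite /a' valK.
  have b'E (k : 'I_n) : b' k = `|pi k true| ^+ 2 by rewrite /b' valK.
  have a'0 j : 0 <= a' j by rewrite /a'; case: insub => [k|] //=; apply: exprn_ge0.
  have b'0 j : 0 <= b' j by rewrite /b'; case: insub => [k|] //=; apply: exprn_ge0.
  have ab j : a' j + b' j = 1.
    rewrite /a' /b'; case: insub => [k|] /=; last by rewrite addr0.
    by rewrite -(hpi k) /normsq big_bool /= addrC.
  have X2 : X ^+ 2 = \prod_(k < n) a' k.
    rewrite /X /pis /prodstate normr_prod -prodrXl; apply: eq_bigr => k _.
    by rewrite a'E /zeros ffunE.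
  have P1E : P1 = PP1 a' b' n.
    rewrite /P1 sum_w1 /PP1; apply: eq_bigr => k _.
    rewrite /pis /prodstate normr_prod -prodrXl (bigD1 k) //= b'E /ebit ffunE eqxx.
    congr (_ * _); apply: eq_big => [j|j hj]; first by [].
    by rewrite ffunE (negbTE hj) a'E.
  pose aR j := rc (a' j). pose bR j := rc (b' j).
  have vaR j : val (aR j) = a' j by rewrite rcK // ger0_real.
  have vbR j : val (bR j) = b' j by rewrite rcK // ger0_real.
  have haR k : 0 <= aR k by rewrite rcleE vaR.
  have hbR k : 0 <= bR k by rewrite rcleE vbR.
  have habR k : aR k + bR k = 1 by apply: val_inj; rewrite rmorphD /= vaR vbR ab.
  have [_ _ _ H] := prod_inv n haR hbR habR.
  have vP0 : val (\prod_(k < n) aR k) = \prod_(k < n) a' k.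
    by rewrite rmorph_prod; apply: eq_bigr => k _; exact: vaR.
  have vPP : val (PP1 aR bR n) = PP1 a' b' n.
    rewrite /PP1 rmorph_sum; apply: eq_bigr => k _; rewrite rmorphM rmorph_prod.
    by congr (_ * _); [exact: vbR | apply: eq_bigr => j _; exact: vaR].
  have H' : 2 * val (\prod_(k < n) aR k) * (1 - val (\prod_(k < n) aR k)) <=
            val (PP1 aR bR n) * (1 + val (\prod_(k < n) aR k)) := H.
  by rewrite vP0 vPP -X2 -P1E in H'.
have n3 : (3%:R : C) != 0 by rewrite pnatr_eq0.
have n27 : (27%:R : C) != 0 by rewrite pnatr_eq0.
have qE : 1 / 3%:R - c = beta ^+ 2 + gamma ^+ 2 + delta ^+ 2.
  have ec : c = alpha ^+ 2 - 2%:R / 3%:R by rewrite eal; ring.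
  have ea2 : alpha ^+ 2 = 1 - (beta ^+ 2 + gamma ^+ 2 + delta ^+ 2) by rewrite -norm1; ring.
  by rewrite ec ea2; field.
have q0 : 0 <= 1 / 3%:R - c.
  by rewrite qE; apply: addr_ge0; [apply: addr_ge0|]; apply: exprn_ge0.
set Y := sqrtC P1. set Z := sqrtC P2.
set kk := sqrtC (2%:R / 27%:R). set rr := sqrtC (2%:R : C). set qq := sqrtC (1 / 3%:R - c).
set AA := `|a|. set GG := normsq Pp.
have X0 : 0 <= X by apply: normr_ge0.
have Y0 : 0 <= Y by rewrite sqrtC_ge0.
have Z0 : 0 <= Z by rewrite sqrtC_ge0.
have k0 : 0 <= kk by rewrite sqrtC_ge0 divr_ge0 // ler0n.
have r0 : 0 <= rr by rewrite sqrtC_ge0 ler0n.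
have qq0 : 0 <= qq by rewrite sqrtC_ge0.
have AA0 : 0 <= AA by apply: normr_ge0.
have GG0 : 0 <= GG by apply: sumr_ge0 => i _; apply: exprn_ge0.
pose xR := rc X. pose yR := rc Y. pose zR := rc Z. pose alR := rc alpha. pose beR := rc beta.
pose gaR := rc gamma. pose deR := rc delta. pose cR := rc c. pose kR := rc kk. pose rR := rc rr.
pose qR := rc qq. pose AR := rc AA. pose GR := rc GG.
have vx : val xR = X by rewrite rcK // ger0_real.
have vy : val yR = Y by rewrite rcK // ger0_real.
have vz : val zR = Z by rewrite rcK // ger0_real.
have val' : val alR = alpha by rewrite rcK // ger0_real.
have vbe : val beR = beta by rewrite rcK // ger0_real.
have vga : val gaR = gamma by rewrite rcK // ger0_real.
have vde : val deR = delta by rewrite rcK // ger0_real.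
have vc : val cR = c by rewrite rcK // ger0_real.
have vk : val kR = kk by rewrite rcK // ger0_real.
have vr : val rR = rr by rewrite rcK // ger0_real.
have vq : val qR = qq by rewrite rcK // ger0_real.
have vA : val AR = AA by rewrite rcK // ger0_real.
have vG : val GR = GG by rewrite rcK // ger0_real.
Ltac vsimp := rewrite ?valN ?(valX, valD, valB, valO, valM, valV, valN, val1, val0).
have nn (t : RC C) (v : C) : val t = v -> 0 <= v -> 0 <= t.
  by move=> e h; rewrite rcleE val0 e.
have er : rR ^+ 2 = 2.
  by apply: val_inj; vsimp; rewrite vr sqrtCK.
have ek : kR ^+ 2 = 2 / 27.
  by apply: val_inj; vsimp; rewrite vk sqrtCK.
have eqq : qR ^+ 2 = 1 / 3 - cR.
  by apply: val_inj; vsimp; rewrite vq sqrtCK vc.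
have ealR : alR ^+ 2 = 2 / 3 + cR.
  by apply: val_inj; vsimp; rewrite val' vc.
have esum : alR ^+ 2 + beR ^+ 2 + gaR ^+ 2 + deR ^+ 2 = 1.
  by apply: val_inj; vsimp; rewrite val' vbe vga vde.
have exyz : xR ^+ 2 + yR ^+ 2 + zR ^+ 2 = 1.
  by apply: val_inj; vsimp; rewrite vx vy vz /Y /Z !sqrtCK.
have hprodR : 2 * xR ^+ 2 * (1 - xR ^+ 2) <= yR ^+ 2 * (1 + xR ^+ 2).
  by rewrite rcleE; vsimp; rewrite vx vy /Y sqrtCK.
have hAb : AR <= alR * xR + deR * yR + beR * zR.
  by rewrite rcleE; vsimp; rewrite vA val' vx vde vy vbe vz.
have hGb : GR <= 1 - xR ^+ 2.
  by rewrite rcleE; vsimp; rewrite vG vx.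
have [B1 B2] := core2 (nn _ _ vx X0) (nn _ _ vy Y0) (nn _ _ vz Z0) (nn _ _ val' al0)
  (nn _ _ vbe be0) (nn _ _ vga ga0) (nn _ _ vde de0) (nn _ _ vc c0) (nn _ _ vk k0)
  (nn _ _ vr r0) (nn _ _ vq qq0) (nn _ _ vA AA0) (nn _ _ vG GG0)
  er ek eqq ealR esum exyz hprodR hAb hGb.
have C1 : AA ^+ 2 + gamma ^+ 2 * GG <= (alpha + delta) ^+ 2.
  by move: B1; rewrite rcleE; vsimp; rewrite vA vga vG val' vde.
have C2 : 0 < c -> AA ^+ 2 + gamma ^+ 2 * GG <= (alpha + kk * delta ^+ 2 / c) ^+ 2.
  move=> cp; have cRp : 0 < cR by rewrite rcltE val0 vc.
  by move: (B2 cRp); rewrite rcleE; vsimp; rewrite vA vga vG val' vde vk vc.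
rewrite ePhi -/AA -/GG -/kk.
have [c00|cn0] := eqVneq c 0; first exact: C1.
have cp : 0 < c by rewrite lt_def cn0 c0.
rewrite /Num.min; case: ifP => _; [exact: C1 | exact: C2].
Qed.
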